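(* For all integers $n\ge 2$ and $1\le k<n$, the independence number of $G=H_B(n,k)$ is $\alpha(G)=\sum_{i=1}^n 2^{i-1}\binom{n}{i}-\binom{n}{k}$ (and $V_2$ is a maximum independent set).
   Context: Fix integers $n\ge 2$ and $1\le k<n$ and positive real numbers $x_1<x_2<\dots<x_n$. Let $\mathscr{B}_n=\{\pm x_1,\pm x_2,\dots,\pm x_{n-1},x_n\}$ (so $-x_n\notin\mathscr{B}_n$). Let $\phi(\mathscr{B}_n)$ be the family of all nonempty subsets $S\subseteq\mathscr{B}_n$ whose elements have pairwise distinct absolute values and whose element of largest absolute value is positive. Let $\mathscr{B}_n^+=\{x_1,\dots,x_n\}$, let $V_1$ be the set of all $k$-element subsets of $\mathscr{B}_n^+$, and let $V_2=\phi(\mathscr{B}_n)\setminus V_1$. For $A\in\phi(\mathscr{B}_n)$ put $A^\dagger=\{|a|:a\in A\}$. The bipartite Kneser B type-$k$ graph $H_B(n,k)$ is the simple graph with vertex set $V_1\cup V_2$ in which $X\in V_1$ and $Y\in V_2$ are adjacent if and only if $X\subseteq Y^\dagger$ or $Y^\dagger\subseteq X$, and there are no other edges. The independence number is the maximum size of a set of pairwise nonadjacent vertices. *)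

(* Defs.v *)
From mathcomp Require Import all_boot all_order.
Set Implicit Arguments. Unset Strict Implicit. Unset Printing Implicit Defensive.

(* The signed element  +x_(i+1)  is encoded as (i, true),  -x_(i+1) as (i, false),
   for i : 'I_n.  Since 0 < x_1 < ... < x_n, this encoding is injective and
   |(i,b)| corresponds to x_(i+1); comparing absolute values = comparing indices. *)
Notation signed n := ('I_n * bool)%type.

(* B_n = {+-x_1, ..., +-x_(n-1), x_n} : -x_n is excluded *)
Definition Bn (n : nat) : {set signed n} :=
  [set p : signed n | p.2 || (val p.1 < n.-1)].

Definition dagger n (A : {set signed n}) : {set 'I_n} := [set p.1 | p in A].

Definition in_phiB n (S : {set signed n}) : bool :=
  [&& S \subset Bn n, S != set0,
      [forall p in S, forall q in S, (p.1 == q.1) ==> (p == q)] &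
      [forall p in S, [forall q in S, val q.1 <= val p.1] ==> p.2]].

Definition phiB n : {set {set signed n}} := [set S : {set signed n} | in_phiB S].

Definition Bnplus n : {set signed n} := [set p : signed n | p.2].

Definition V1 n (k : nat) : {set {set signed n}} :=
  [set S : {set signed n} | (S \subset Bnplus n) && (#|S| == k)].
Definition V2 n (k : nat) : {set {set signed n}} := phiB n :\: V1 n k.

Definition HB_vertices n (k : nat) : {set {set signed n}} := V1 n k :|: V2 n k.

(* edges: X in V1, Y in V2, X subset Y^dagger or Y^dagger subset X
   (X is identified with X^dagger since X consists of positive elements) *)
Definition HB_edge1 n (k : nat) (X Y : {set signed n}) : bool :=
  [&& X \in V1 n k, Y \in V2 n k &
      (dagger X \subset dagger Y) || (dagger Y \subset dagger X)].

Definition HB_adj n (k : nat) (X Y : {set signed n}) : bool :=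
  HB_edge1 k X Y || HB_edge1 k Y X.

Definition HB_independent n (k : nat) (I : {set {set signed n}}) : bool :=
  (I \subset HB_vertices n k) &&
  [forall X in I, forall Y in I, ~~ HB_adj k X Y].

Definition HB_alpha n (k : nat) : nat :=
  \max_(I : {set {set signed n}} | HB_independent k I) #|I|.

(* Main.v *)
Require Import Defs.
From mathcomp Require Import all_boot all_order zify.

Section S.
Variables (n k : nat).
Hypotheses (hn : 2 <= n) (hk1 : 1 <= k) (hkn : k < n).

Definition lastI : {set 'I_n} := [set i | val i == n.-1].

Definition gT (T : {set 'I_n}) : {set signed n} :=
  [set p | if p.2 then val p.1 == n.-1 else (p.1 \in T) && (val p.1 != n.-1)].

Definition spec : {set signed n} :=
  [set p | p.2 && ((val p.1 == 0) || (val p.1 == n.-1))].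

Definition hT (T : {set 'I_n}) := if T == lastI then spec else gT T.

Definition FF (X : {set signed n}) := hT (dagger X).

Lemma olP : n.-1 < n. Proof. lia. Qed.
Lemma o0P : 0 < n. Proof. lia. Qed.
Definition ol : 'I_n := Ordinal olP.
Definition o0 : 'I_n := Ordinal o0P.

Lemma daggerP (X : {set signed n}) i :
  reflect (exists b, (i, b) \in X) (i \in dagger X).
Proof.
apply: (iffP imsetP) => [[[j b] Hp /= ->]|[b Hb]]; first by exists b.
by exists (i, b).
Qed.

Lemma mem_V1 X p : X \in V1 n k -> (p \in X) = (p.2 && (p.1 \in dagger X)).
Proof.
rewrite inE => /andP[/subsetP sub _].
case: p => i b /=; apply/idP/idP.
  move=> H; have := sub _ H; rewrite inE /= => ->; apply/daggerP; by exists b.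
by case/andP => -> /daggerP [[]//] H; have := sub _ H; rewrite inE.
Qed.

Lemma V1_inj X Y : X \in V1 n k -> Y \in V1 n k -> dagger X = dagger Y -> X = Y.
Proof.
move=> hX hY e; apply/setP => p; by rewrite (mem_V1 _ p hX) (mem_V1 _ p hY) e.
Qed.

Lemma phiB_intro (S : {set signed n}) :
  (forall p, p \in S -> p.2 || (val p.1 < n.-1)) -> S != set0 ->
  (forall p q, p \in S -> q \in S -> p.1 = q.1 -> p = q) ->
  (forall p, p \in S -> (forall q, q \in S -> val q.1 <= val p.1) -> p.2) ->
  S \in phiB n.
Proof.
move=> h1 h2 h3 h4; rewrite inE /in_phiB h2 /=; apply/and3P; split.
- by apply/subsetP => p /h1; rewrite inE.
- apply/forall_inP => p hp; apply/forall_inP => q hq; apply/implyP => /eqP e.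
  by rewrite (h3 _ _ hp hq e).
- apply/forall_inP => p hp; apply/implyP => /forall_inP H; apply: h4 => // q hq.
Qed.

Lemma gT_phiB T : gT T \in phiB n.
Proof.
have olin : (ol, true) \in gT T by rewrite inE /= eqxx.
apply: phiB_intro.
- move=> [i b]; rewrite inE /=; case: b => //= /andP[_ h].
  have := ltn_ord i; lia.
- by apply/set0Pn; exists (ol, true).
- move=> [i b] [j c]; rewrite !inE /= => hb hc e; subst j.
  case: b c hb hc => [] [] //=; first by move=> /eqP -> /andP[_ /eqP].
  by move=> /andP[_ /eqP] + /eqP.
- move=> [i b]; rewrite inE /=; case: b => //= /andP[_ h] H.
  have := H _ olin; rewrite /=. have := ltn_ord i; lia.
Qed.

Lemma spec_phiB : spec \in phiB n.
Proof.
apply: phiB_intro.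
- by move=> [i b]; rewrite inE /= => /andP[->].
- by apply/set0Pn; exists (ol, true); rewrite inE /= eqxx orbT.
- move=> [i b] [j c]; rewrite !inE /= => /andP[-> _] /andP[-> _] e; by subst.
- by move=> [i b]; rewrite inE /= => /andP[->].
Qed.

Lemma card_dagger (X : {set signed n}) : X \in V1 n k -> #|dagger X| = k.
Proof.
move=> hX; have := hX; rewrite inE => /andP[_ /eqP <-].
rewrite /dagger card_in_imset // => p q hp hq e.
move: (hp) (hq); rewrite (mem_V1 _ p hX) (mem_V1 _ q hX).
case: p q e {hp hq} => [i b] [j c] /= -> /andP[-> _] /andP[-> _] //.
Qed.

Lemma ol_neq i : (i != ol) = (val i != n.-1).
Proof. by rewrite -(inj_eq val_inj). Qed.

Lemma lastIE : lastI = [set ol].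
Proof. by apply/setP => i; rewrite !inE -(inj_eq val_inj). Qed.

Lemma gT_inj (T1 T2 : {set 'I_n}) : #|T1| = #|T2| -> gT T1 = gT T2 -> T1 = T2.
Proof.
move=> ec eg.
have H i : i != ol -> (i \in T1) = (i \in T2).
  move=> hi; have : ((i, false) \in gT T1) = ((i, false) \in gT T2) by rewrite eg.
  by rewrite !inE /= -ol_neq hi !andbT.
have eD : T1 :\ ol = T2 :\ ol.
  apply/setP => i; rewrite !inE; case: (eqVneq i ol) => //= hi; exact: H.
have eo : (ol \in T1) = (ol \in T2).
  move: ec; rewrite (cardsD1 ol T1) (cardsD1 ol T2) eD => /eqP.
  rewrite eqn_add2r; by case: (ol \in T1); case: (ol \in T2).
apply/setP => i; case: (eqVneq i ol) => [->//|]; exact: H.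
Qed.

Lemma FF_V2 (X : {set signed n}) : X \in V1 n k -> FF X \in V2 n k.
Proof.
move=> hX; have cX := card_dagger _ hX.
rewrite /FF /hT inE; case: ifP => [/eqP e|ne].
  rewrite spec_phiB andbT inE negb_and; apply/orP; right.
  have k1 : k = 1 by rewrite -cX e lastIE cards1.
  rewrite k1; apply/negP => /eqP c1.
  have o0l : o0 != ol by rewrite -(inj_eq val_inj) /=; lia.
  have sub : [set (o0, true); (ol, true)] \subset spec.
    by apply/subsetP => p; rewrite !inE => /orP[]/eqP -> //=; rewrite eqxx orbT.
  have := subset_leq_card sub.
  rewrite cards2 c1.
  have -> : ((o0, true) != (ol, true)) by rewrite xpair_eqE negb_and o0l.
  done.
rewrite gT_phiB andbT inE negb_and; apply/orP; left.
have [i hi hio] : exists2 i, i \in dagger X & i != ol.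
  apply/exists_inP; apply: contraFT ne => /exists_inPn H.
  rewrite lastIE eqEcard cards1 cX hk1 andbT.
  by apply/subsetP => i hi; rewrite inE; have := H i hi; rewrite negbK.
apply/subsetP => /(_ (i, false)); rewrite !inE /= hi -ol_neq hio => /(_ isT).
done.
Qed.

Lemma FF_adj (X : {set signed n}) : X \in V1 n k -> dagger X \subset dagger (FF X).
Proof.
move=> hX; apply/subsetP => i hi; apply/daggerP.
rewrite /FF /hT; case: ifP => [/eqP e|ne].
  move: hi; rewrite e lastIE inE => /eqP ->; exists true; by rewrite inE /= eqxx orbT.
case: (eqVneq i ol) => [->|hio]; first by exists true; rewrite inE /= eqxx.
by exists false; rewrite inE /= hi -ol_neq hio.
Qed.

Lemma FF_inj (X Y : {set signed n}) : X \in V1 n k -> Y \in V1 n k -> FF X = FF Y -> X = Y.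
Proof.
move=> hX hY; rewrite /FF /hT => e; apply: V1_inj => //.
have specN T : spec != gT T.
  apply/negP => /eqP /setP /(_ (o0, true)); rewrite !inE /=.
  move=> /esym /eqP; lia.
move: e; case: ifP => [/eqP ->|nX]; case: ifP => [/eqP ->|nY] //.
- by move=> e; move: (specN (dagger Y)); rewrite e eqxx.
- by move=> e; move: (specN (dagger X)); rewrite e eqxx.
- apply: gT_inj; by rewrite !card_dagger.
Qed.
End S.

Section C.
Variable n : nat.

Definition hN (T N : {set 'I_n}) : {set signed n} :=
  [set p : signed n | (p.1 \in T) && (p.2 == (p.1 \notin N))].
Definition negs (S : {set signed n}) : {set 'I_n} := [set i | (i, false) \in S].

Lemma fiber_card (T : {set 'I_n}) : T != set0 ->
  #|[set S in phiB n | dagger S == T]| = 2 ^ #|T|.-1.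
Proof.
rewrite -card_gt0 => /(eq_bigmax_cond (fun i : 'I_n => val i)) [i0 i0T e0].
have mx i : i \in T -> val i <= val i0.
  move=> iT; rewrite -e0; exact: leq_bigmax_cond.
have -> : [set S in phiB n | dagger S == T] = hN T @: powerset (T :\ i0).
  apply/setP => S; rewrite inE; apply/andP/imsetP.
  - case; rewrite inE /in_phiB => /and4P[_ _ /forall_inP dis /forall_inP mxc] /eqP dS.
    have dis' p q : p \in S -> q \in S -> p.1 = q.1 -> p = q.
      by move=> hp hq e; move: (dis p hp) => /forall_inP /(_ q hq); rewrite e eqxx => /eqP.
    exists (negs S).
      rewrite inE; apply/subsetP => i; rewrite !inE => hi.
      have iT : i \in T by rewrite -dS; apply/daggerP; exists false.
      rewrite iT andbT; apply/negP => /eqP ei; subst i.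
      move: (mxc _ hi) => /implyP /= H; suff : false by []; apply: H.
      apply/forall_inP => q hq; apply: mx; rewrite -dS; apply/daggerP; exists q.2.
      by case: q hq.
    apply/setP => [[i b]]; rewrite !inE /=; apply/idP/idP.
      move=> hb; have iT : i \in T by rewrite -dS; apply/daggerP; exists b.
      rewrite iT /=; case: b hb => hb /=; last by rewrite hb.
      apply/eqP/esym/negP => hf; by move: (dis' _ _ hb hf erefl).
    case/andP => iT; have := iT; rewrite -dS => /daggerP [c hc].
    case: b => /eqP; last by move/esym/negbFE.
    move=> /esym hf; case: c hc => // hc; by rewrite hc in hf.
  - case=> N; rewrite inE => sN ->.
    have Ni0 : i0 \notin N by apply/negP => /(subsetP sN); rewrite !inE eqxx.
    have NT i : i \in N -> (i != i0) && (i \in T) by move/(subsetP sN); rewrite !inE.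
    have i0in : (i0, i0 \notin N) \in hN T N by rewrite inE /= i0T eqxx.
    split; last first.
      apply/eqP/setP => i; apply/daggerP/idP => [[b]|iT]; first by rewrite inE => /andP[].
      by exists (i \notin N); rewrite inE /= iT eqxx.
    apply: phiB_intro.
    + move=> [i [] //]; rewrite inE /= => /andP[_] /eqP/esym/negbFE /NT /andP[ne iT].
      have := mx _ iT; have := ltn_ord i0; have : nat_of_ord i != nat_of_ord i0 by rewrite (inj_eq val_inj).
      rewrite /=; lia.
    + by apply/set0Pn; exists (i0, i0 \notin N).
    + move=> [i b] [j c]; rewrite !inE /= => /andP[_ /eqP ->] /andP[_ /eqP ->] ->; done.
    + move=> [i b]; rewrite inE /= => /andP[iT /eqP ->] H.
      have := H _ i0in; rewrite /= => h.
      have -> : i = i0 by apply: val_inj; apply/eqP; rewrite eqn_leq h andbT; exact: mx.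
      done.
rewrite card_in_imset; last first.
  move=> N1 N2; rewrite !inE => s1 s2 e; apply/setP => i.
  case iT: (i \in T); last first.
    apply/idP/idP => [/(subsetP s1)|/(subsetP s2)]; by rewrite inE iT andbF.
  move/setP: e => /(_ (i, false)); rewrite !inE /= iT /=.
  by case: (i \in N1); case: (i \in N2).
by rewrite card_powerset (cardsD1 i0 T) i0T.
Qed.

Lemma phiB_ne (S : {set signed n}) : S \in phiB n -> dagger S != set0.
Proof.
rewrite inE /in_phiB => /and4P[_ /set0Pn [p hp] _ _].
apply/set0Pn; exists p.1; apply/daggerP; exists p.2; by case: p hp.
Qed.

Lemma sum_sets :
  \sum_(T : {set 'I_n} | T != set0) 2 ^ #|T|.-1 =
  \sum_(1 <= i < n.+1) 2 ^ i.-1 * 'C(n, i).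
Proof.
pose f i := 2 ^ i.-1.
transitivity (\sum_(T : {set 'I_n}) \sum_(1 <= i < n.+1) (if #|T| == i then f i else 0)).
  rewrite big_mkcond; apply: eq_bigr => T _.
  case: eqP => [->|/eqP ne].
    rewrite big_nat_cond big1 // => i /andP[/andP[h _] _]; rewrite cards0.
    case: eqP => // e; move: h; rewrite -e.  done.
  have h1 : 0 < #|T| by rewrite card_gt0.
  have h2 : #|T| <= n by rewrite -[X in _ <= X]card_ord max_card.
  rewrite (bigD1_seq #|T|) /=; last exact: iota_uniq.
    rewrite eqxx big1 ?addn0 // => i /negPf; rewrite eq_sym => ->; done.
  by rewrite mem_index_iota h1 ltnS h2.
rewrite exchange_big; apply: eq_bigr => i _.
rewrite -big_mkcond /= sum_nat_cond_const card_draws card_ord mulnC.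
done.
Qed.

Lemma card_phiB : #|phiB n| = \sum_(1 <= i < n.+1) 2 ^ i.-1 * 'C(n, i).
Proof.
rewrite -sum_sets -sum1_card (partition_big (@dagger n) (fun T => T != set0)) /=;
  last exact: phiB_ne.
apply: eq_bigr => T ne; rewrite sum1dep_card; exact: fiber_card.
Qed.
End C.

Section M.
Variables (n k : nat).
Hypotheses (hn : 2 <= n) (hk1 : 1 <= k) (hkn : k < n).

Lemma card_V1 : #|V1 n k| = 'C(n, k).
Proof.
rewrite -(card_in_imset (f := @dagger n) (D := V1 n k)); last first.
  move=> X Y hX hY; exact: (V1_inj _ _ _ _ hX hY).
rewrite -[X in 'C(X, _)]card_ord -card_draws; apply: eq_card => T.
rewrite inE; apply/imsetP/eqP => [[X hX ->]|cT]; first exact: card_dagger.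
exists [set p : signed n | p.2 && (p.1 \in T)].
  rewrite inE; apply/andP; split.
    by apply/subsetP => p; rewrite !inE => /andP[].
  have -> : [set p : signed n | p.2 && (p.1 \in T)] = (fun i => (i, true)) @: T.
    apply/setP => [[i b]]; rewrite inE /=; apply/andP/imsetP => [[-> iT]|[j jT [-> ->]]] //.
    by exists i.
  rewrite card_imset ?cT // => i j [].
  done.
apply/setP => i; apply/idP/daggerP => [iT|[b]]; last by rewrite inE => /andP[].
by exists true; rewrite inE.
Qed.

Lemma V1_sub : V1 n k \subset phiB n.
Proof.
apply/subsetP => X hX; have := hX; rewrite inE => /andP[/subsetP sub /eqP cX].
have pos p : p \in X -> p.2 by move/sub; rewrite inE.
apply: phiB_intro.
- by move=> p /pos ->.
- by rewrite -card_gt0 cX.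
- by move=> [i b] [j c] /pos /= -> /pos /= -> /= ->.
- by move=> p /pos.
Qed.

Lemma bound (I : {set {set signed n}}) : HB_independent k I -> #|I| <= #|V2 n k|.
Proof.
case/andP => /subsetP sub /forall_inP ind.
have nI X : X \in I -> X \in V1 n k -> FF n X \notin I.
  move=> hI hV; apply/negP => hF.
  move: (ind X hI) => /forall_inP /(_ _ hF); rewrite /HB_adj /HB_edge1.
  by rewrite hV (@FF_V2 n k hn hk1 hkn _ hV) (@FF_adj n k hn hk1 hkn _ hV).
rewrite -(cardsID (V1 n k) I).
rewrite -(card_in_imset (f := FF n) (D := I :&: V1 n k)); last first.
  move=> X Y; rewrite !in_setI => /andP[_ hX] /andP[_ hY]; exact: (@FF_inj n k hn hk1 hkn X Y).
apply: (@leq_trans (#|V2 n k :&: I| + #|V2 n k :\: I|)); last by rewrite cardsID.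
rewrite addnC leq_add //; apply: subset_leq_card; apply/subsetP.
- move=> Y; rewrite in_setD in_setI => /andP[nY hY]; rewrite hY andbT.
  by move: (sub _ hY); rewrite in_setU (negPf nY).
- move=> Z /imsetP [X]; rewrite in_setI => /andP[hI hV] ->.
  by rewrite in_setD nI // (@FF_V2 n k hn hk1 hkn _ hV).
Qed.
End M.

Theorem mainTheorem2 (n k : nat) (hn : 2 <= n) (hk1 : 1 <= k) (hkn : k < n) :
  HB_alpha n k = (\sum_(1 <= i < n.+1) 2 ^ i.-1 * 'C(n, i)) - 'C(n, k)
  /\ HB_independent k (V2 n k)
  /\ #|V2 n k| = HB_alpha n k.
Proof.
have cV2 : #|V2 n k| = (\sum_(1 <= i < n.+1) 2 ^ i.-1 * 'C(n, i)) - 'C(n, k).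
  by rewrite /V2 cardsD (setIidPr (@V1_sub n k hk1)) card_phiB (card_V1 n k).
have ind : HB_independent k (V2 n k).
  apply/andP; split; first exact: subsetUr.
  apply/forall_inP => X hX; apply/forall_inP => Y hY.
  rewrite /HB_adj /HB_edge1; move: hX hY; rewrite !in_setD => /andP[/negPf -> _] /andP[/negPf -> _].
  by rewrite !andFb.
have al : HB_alpha n k = #|V2 n k|.
  apply/eqP; rewrite eqn_leq; apply/andP; split.
    apply/bigmax_leqP => I hI; exact: (@bound n k hn hk1 hkn).
  rewrite /HB_alpha; exact: leq_bigmax_cond.
by rewrite al cV2.
Qed.
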